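(* Let $F$ be an Archimedean vector lattice and $E\subset F$ a sublattice. If $E$ is regular and the ideal $I(E)$ generated by $E$ is a projection band, then the inclusion of $E$ into $F$ is an order embedding. Conversely, if $E$ is order dense in $I(E)$ and the inclusion of $E$ into $F$ is an order embedding, then $I(E)$ is a projection band.
   Context: A sublattice $E\subset F$ is regular if for every $G\subset E$ with $\bigwedge_E G=0$ (infimum in $E$) one has $\bigwedge_F G=0$. $E$ is order dense in a sublattice $H\supset E$ if for every $h\in H$ with $h>0$ there is $e\in E$ with $0<e\le h$. An ideal $H$ is a projection band if $F=H+H^d$, where $H^d$ is the disjoint complement. A net order converges to $f$ if there is a set $G$ with $\bigwedge G=0$ such that for every $g\in G$ the net is eventually in $[f-g,f+g]$. The inclusion of $E$ into $F$ is an order embedding if for nets in $E$ and points of $E$, order convergence in $E$ is equivalent to order convergence in $F$. *)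

(* Defs.v *)
(* Real vector lattices are encoded explicitly: a carrier
   F : lmodType R over R : realType, an order relation [le] and a binary
   operation [join] which is required to be the supremum of two elements. *)
From HB Require Import structures.
From mathcomp Require Import all_boot all_order all_algebra.
From mathcomp Require Import reals.
Set Implicit Arguments. Unset Strict Implicit. Unset Printing Implicit Defensive.
Import Order.TTheory GRing.Theory Num.Theory.
Local Open Scope ring_scope.

Section VL.
Variables (R : realType) (F : lmodType R) (le : F -> F -> Prop) (join : F -> F -> F).

Definition vector_lattice : Prop :=
  [/\ (forall x, le x x),
      (forall x y, le x y -> le y x -> x = y),
      (forall x y z, le x y -> le y z -> le x z),
      (forall x y z, le x y -> le (x + z) (y + z))
        /\
      (forall (a : R) x y, 0 <= a -> le x y -> le (a *: x) (a *: y)) &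
      (forall x y, le x (join x y) /\ le y (join x y) /\
                      forall z, le x z -> le y z -> le (join x y) z)].

Definition meet (x y : F) : F := - join (- x) (- y).
Definition absv (x : F) : F := join x (- x).
Definition ltv (x y : F) : Prop := le x y /\ x <> y.

Definition archimedean : Prop :=
  forall x y : F, le 0 x -> (forall n : nat, le (x *+ n) y) -> x = 0.

Definition subspace (E : F -> Prop) : Prop :=
  [/\ E 0, (forall x y, E x -> E y -> E (x + y)) &
      (forall (a : R) x, E x -> E (a *: x))].

Definition sublattice (E : F -> Prop) : Prop :=
  subspace E /\ (forall x y, E x -> E y -> E (join x y) /\ E (meet x y)).

Definition inf_in (E G : F -> Prop) (g : F) : Prop :=
  [/\ E g, (forall x, G x -> le g x) &
      (forall h, E h -> (forall x, G x -> le h x) -> le h g)].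

Definition regular (E : F -> Prop) : Prop :=
  forall G : F -> Prop, (forall x, G x -> E x) ->
    inf_in E G 0 -> inf_in (fun _ => True) G 0.

Definition order_dense (E H : F -> Prop) : Prop :=
  forall h, H h -> ltv 0 h -> exists e, E e /\ ltv 0 e /\ le e h.

Definition ideal (I : F -> Prop) : Prop :=
  subspace I /\ (forall x y, I x -> le (absv y) (absv x) -> I y).

Definition ideal_gen (E : F -> Prop) : F -> Prop :=
  fun x => forall I, ideal I -> (forall e, E e -> I e) -> I x.

Definition disj_compl (H : F -> Prop) : F -> Prop :=
  fun x => forall h, H h -> meet (absv x) (absv h) = 0.

Definition projection_band (H : F -> Prop) : Prop :=
  ideal H /\ (forall f, exists h k, H h /\ disj_compl H k /\ f = h + k).

Definition directed (A : Type) (leA : A -> A -> Prop) : Prop :=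
  [/\ inhabited A, (forall a, leA a a),
      (forall a b c, leA a b -> leA b c -> leA a c) &
      (forall a b, exists c, leA a c /\ leA b c)].

(* order convergence of the net x to f, computed in the sublattice E
   (take E := fun _ => True for convergence in F) *)
Definition oconv_in (E : F -> Prop) (A : Type) (leA : A -> A -> Prop)
    (x : A -> F) (f : F) : Prop :=
  exists G : F -> Prop, (forall g, G g -> E g) /\ inf_in E G 0 /\
    forall g, G g -> exists a0, forall a, leA a0 a ->
      le (f - g) (x a) /\ le (x a) (f + g).

Definition order_embedding (E : F -> Prop) : Prop :=
  forall (A : Type) (leA : A -> A -> Prop) (x : A -> F) (f : F),
    directed leA -> (forall a, E (x a)) -> E f ->
    (oconv_in E leA x f <-> oconv_in (fun _ => True) leA x f).

End VL.

(* Main.v *)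
Require Import Defs.
From HB Require Import structures.
From mathcomp Require Import all_boot all_order all_algebra.
From mathcomp Require Import reals.
From Stdlib Require Import Classical_Prop.
Set Implicit Arguments. Unset Strict Implicit. Unset Printing Implicit Defensive.
Import Order.TTheory GRing.Theory Num.Theory.
Local Open Scope ring_scope.

Lemma zA1 (V : zmodType) (e0 k p q : V) : e0 - (p + q) = (e0 - k - q) + (k - p).
Proof. by rewrite addrACA -addrA [- q + _]addrC addrA subrK opprD addrC. Qed.

Lemma zA2 (V : zmodType) (k y p q : V) : (k - y + q) + (y - (p + q)) = k - p.
Proof. by rewrite addrA [k - y + q]addrAC subrK [p + q]addrC addrKA. Qed.
Lemma zA3 (V : zmodType) (a q y p : V) : a + q + (y - (p + q)) = y + (a - p).
Proof. by rewrite addrCA [p + q]addrC addrKA. Qed.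
Lemma zA4 (V : zmodType) (e u q : V) : u - (u + q - e) = e - q.
Proof. by rewrite opprB addrCA opprD addNKr. Qed.

Lemma zA5 (V : zmodType) (a b : V) : a + b - a = b.
Proof. by rewrite addrAC subrr add0r. Qed.
Lemma zA6 (V : zmodType) (a b c d : V) : (a + b) - (c + d) = (a - c) + (b - d).
Proof. by rewrite opprD addrACA. Qed.

Section Lat.
Variables (R : realType) (F : lmodType R) (le : F -> F -> Prop) (join : F -> F -> F).
Hypothesis VL : vector_lattice le join.

Local Notation meet := (meet join).
Local Notation absv := (absv join).
Definition pos (x : F) := join x 0.
Definition neg (x : F) := join (- x) 0.

Lemma le_refl x : le x x. Proof. by case: VL => H _ _ _ _; apply: H. Qed.
Lemma le_anti x y : le x y -> le y x -> x = y. Proof. by case: VL => _ H _ _ _; apply: H. Qed.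
Lemma le_trans x y z : le x y -> le y z -> le x z.
Proof. by case: VL => _ _ H _ _; apply: H. Qed.
Lemma le_add x y z : le x y -> le (x + z) (y + z).
Proof. by case: VL => _ _ _ [H _] _; apply: H. Qed.
Lemma le_scale (a : R) x y : 0 <= a -> le x y -> le (a *: x) (a *: y).
Proof. by case: VL => _ _ _ [_ H] _; apply: H. Qed.
Lemma joinl x y : le x (join x y). Proof. by case: VL => _ _ _ _ H; case: (H x y). Qed.
Lemma joinr x y : le y (join x y). Proof. by case: VL => _ _ _ _ H; case: (H x y) => _ []. Qed.
Lemma join_lub x y z : le x z -> le y z -> le (join x y) z.
Proof. by case: VL => _ _ _ _ H; case: (H x y) => _ [] _; apply. Qed.

Lemma le_addl x y z : le x y -> le (z + x) (z + y).
Proof. by rewrite ![z + _]addrC; apply: le_add. Qed.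
Lemma le_add2 x y z w : le x y -> le z w -> le (x + z) (y + w).
Proof. move=> h1 h2; apply: le_trans (le_add _ h1) (le_addl _ h2). Qed.
Lemma le_subr x y z : le x y -> le (x - z) (y - z). Proof. exact: le_add. Qed.
Lemma le_sub0 x y : le x y <-> le 0 (y - x).
Proof.
split=> h; first by have := le_add (- x) h; rewrite subrr.
by have := le_add x h; rewrite add0r subrK.
Qed.
Lemma le_opp x y : le x y -> le (- y) (- x).
Proof.
move=> h; have := le_add (- x - y) h.
by rewrite addrA subrr add0r addrCA subrr addr0.
Qed.
Lemma le_oppr x y : le (- y) (- x) -> le x y.
Proof. by move/le_opp; rewrite !opprK. Qed.
Lemma le_addA x y z : le (x + z) (y + z) -> le x y.
Proof. by move/(le_add (- z)); rewrite !addrK. Qed.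

Lemma joinC x y : join x y = join y x.
Proof. by apply: le_anti; apply: join_lub; [apply: joinr|apply: joinl|apply: joinr|apply: joinl]. Qed.
Lemma join_mono x x' y y' : le x x' -> le y y' -> le (join x y) (join x' y').
Proof.
move=> h1 h2; apply: join_lub; [apply: le_trans h1 (joinl _ _)|apply: le_trans h2 (joinr _ _)].
Qed.
Lemma joinD x y z : join (x + z) (y + z) = join x y + z.
Proof.
apply: le_anti.
  by apply: join_lub; apply: le_add; [apply: joinl|apply: joinr].
apply: (@le_addA _ _ (- z)); rewrite addrK; apply: join_lub.
  by apply: (@le_addA _ _ z); rewrite subrK; apply: joinl.
by apply: (@le_addA _ _ z); rewrite subrK; apply: joinr.
Qed.
Lemma join_id x : join x x = x.
Proof. by apply: le_anti; [apply: join_lub; apply: le_refl| apply: joinl]. Qed.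

Lemma meetl x y : le (meet x y) x.
Proof. by apply: le_oppr; rewrite /Defs.meet opprK; apply: joinl. Qed.
Lemma meetr x y : le (meet x y) y.
Proof. by apply: le_oppr; rewrite /Defs.meet opprK; apply: joinr. Qed.
Lemma meet_glb x y z : le z x -> le z y -> le z (meet x y).
Proof.
move=> h1 h2; apply: le_oppr; rewrite /Defs.meet opprK.
by apply: join_lub; apply: le_opp.
Qed.
Lemma meetC x y : meet x y = meet y x.
Proof. by rewrite /Defs.meet joinC. Qed.
Lemma meet_mono x x' y y' : le x x' -> le y y' -> le (meet x y) (meet x' y').
Proof.
move=> h1 h2; apply: meet_glb; [apply: le_trans (meetl _ _) h1|apply: le_trans (meetr _ _) h2].
Qed.

Lemma meetE x y : meet x y = x - pos (x - y).
Proof.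
rewrite /Defs.meet /pos.
have E1 : join (- x) (- y) = join 0 (x - y) + - x.
  by rewrite -joinD add0r addrC addKr.
by rewrite E1 opprD opprK addrC joinC.
Qed.

Lemma pos_ge0 x : le 0 (pos x). Proof. exact: joinr. Qed.
Lemma pos_ge x : le x (pos x). Proof. exact: joinl. Qed.
Lemma pos_lub x z : le x z -> le 0 z -> le (pos x) z. Proof. exact: join_lub. Qed.
Lemma pos_id x : le 0 x -> pos x = x.
Proof. by move=> h; apply: le_anti; [apply: pos_lub => //; apply: le_refl|apply: pos_ge]. Qed.
Lemma pos_mono x y : le x y -> le (pos x) (pos y).
Proof. by move=> h; apply: join_mono => //; apply: le_refl. Qed.
Lemma neg_ge0 x : le 0 (neg x). Proof. exact: joinr. Qed.

Lemma meet0r x : meet x 0 = - neg x.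
Proof. by rewrite /Defs.meet /neg oppr0. Qed.
Lemma pos_neg x : x = pos x - neg x.
Proof.
have := meetE x 0; rewrite meet0r subr0 => h.
by rewrite h addrC subrK.
Qed.
Lemma meet_pos_neg x : meet (pos x) (neg x) = 0.
Proof. by rewrite meetE -pos_neg subrr. Qed.
Lemma disj_pos a c : meet a c = 0 -> pos (a - c) = a.
Proof. by rewrite meetE => /subr0_eq. Qed.
Lemma meetD a b c : meet (a + b) (c + b) = meet a c + b.
Proof.
rewrite !meetE.
have -> : (a + b) - (c + b) = a - c by rewrite opprD addrACA subrr addr0.
by rewrite addrAC.
Qed.
Lemma meet_ge0 a c : le 0 a -> le 0 c -> le 0 (meet a c).
Proof. exact: meet_glb. Qed.
Lemma le_addr0 a b : le 0 b -> le a (a + b).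
Proof. by move=> h; have := le_addl a h; rewrite addr0. Qed.
Lemma meet_sumle a b c : le 0 b -> meet a c = 0 -> le (meet (a + b) c) b.
Proof.
move=> hb hac; apply: le_trans (meet_mono (le_refl _) (le_addr0 c hb)) _.
by rewrite meetD hac add0r; apply: le_refl.
Qed.
Lemma meet_sum0 a b c : le 0 a -> le 0 b -> le 0 c -> meet a c = 0 -> meet b c = 0 ->
  meet (a + b) c = 0.
Proof.
move=> ha hb hc hac hbc; apply: le_anti; last by apply: meet_ge0 => //; rewrite -[0]addr0; apply: le_add2.
rewrite -hbc; apply: meet_glb; [exact: meet_sumle|exact: meetr].
Qed.
Lemma mulrn_ge0 p m : le 0 p -> le 0 (p *+ m).
Proof.
move=> hp; elim: m => [|m IH]; first by rewrite mulr0n; apply: le_refl.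
by rewrite mulrS -[0]addr0; apply: le_add2.
Qed.
Lemma meet0l c : le 0 c -> meet 0 c = 0.
Proof. by move=> hc; apply: le_anti; [apply: meetl|apply: meet_ge0 => //; apply: le_refl]. Qed.
Lemma disjD p u m : le 0 p -> le p (pos u) -> meet (p *+ m) (neg u) = 0.
Proof.
move=> hp hpu; elim: m => [|m IH]; first by rewrite mulr0n meet0l //; apply: neg_ge0.
rewrite mulrS; apply: meet_sum0 => //; first exact: mulrn_ge0.
  exact: neg_ge0.
apply: le_anti; last by apply: meet_ge0 => //; apply: neg_ge0.
by rewrite -(meet_pos_neg u); apply: meet_mono => //; apply: le_refl.
Qed.

Lemma ge0_2 x : le 0 (x *+ 2) -> le 0 x.
Proof.
move=> h; have h2 : (0:R) <= 2%:R^-1 by rewrite invr_ge0 ler0n.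
have := @le_scale (2%:R^-1) _ _ h2 h.
rewrite scaler0 -scaler_nat scalerA mulVf ?scale1r //.
by rewrite pnatr_eq0.
Qed.
Lemma abs_gex x : le x (absv x). Proof. exact: joinl. Qed.
Lemma abs_gen x : le (- x) (absv x). Proof. exact: joinr. Qed.
Lemma abs_lub x e : le x e -> le (- x) e -> le (absv x) e. Proof. exact: join_lub. Qed.
Lemma abs_ge0 x : le 0 (absv x).
Proof.
apply: ge0_2; rewrite mulr2n -(subrr x); apply: le_add2; [exact: abs_gex|exact: abs_gen].
Qed.
Lemma abs_pos x : le 0 x -> absv x = x.
Proof.
move=> h; apply: le_anti; last exact: abs_gex.
apply: abs_lub; first exact: le_refl.
have := le_opp h; rewrite oppr0 => h'; exact: le_trans h' h.
Qed.
Lemma abs_opp x : absv (- x) = absv x.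
Proof. by rewrite /Defs.absv opprK joinC. Qed.
Lemma abs_add x y : le (absv (x + y)) (absv x + absv y).
Proof.
apply: abs_lub; first by apply: le_add2; apply: abs_gex.
by rewrite opprD; apply: le_add2; apply: abs_gen.
Qed.
Lemma abs_scale (a : R) x : le (absv (a *: x)) (`|a| *: absv x).
Proof.
have [ha|ha] := leP 0 a.
  rewrite ger0_norm //; apply: abs_lub; first by apply: le_scale => //; exact: abs_gex.
  by rewrite -scalerN; apply: le_scale => //; apply: abs_gen.
have ha' : 0 <= - a by rewrite oppr_ge0 ltW.
rewrite ltr0_norm //; apply: abs_lub.
  by rewrite -[a *: x]opprK -scaleNr -scalerN; apply: le_scale => //; apply: abs_gen.
by rewrite -scaleNr; apply: le_scale => //; apply: abs_gex.
Qed.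
Lemma pos_le_abs x : le (pos x) (absv x).
Proof. apply: pos_lub; [exact: abs_gex|exact: abs_ge0]. Qed.

Section Sub.
Variable E : F -> Prop.
Hypothesis hE : sublattice join E.
Lemma sl0 : E 0. Proof. by case: hE => -[]. Qed.
Lemma slD x y : E x -> E y -> E (x + y). Proof. by case: hE => -[_ H _] _; apply: H. Qed.
Lemma slZ (a : R) x : E x -> E (a *: x). Proof. by case: hE => -[_ _ H] _; apply: H. Qed.
Lemma slN x : E x -> E (- x). Proof. by move=> h; rewrite -scaleN1r; apply: slZ. Qed.
Lemma slB x y : E x -> E y -> E (x - y). Proof. by move=> h1 h2; apply: slD => //; apply: slN. Qed.
Lemma slJ x y : E x -> E y -> E (join x y). Proof. by case: hE => _ H h1 h2; case: (H _ _ h1 h2). Qed.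
Lemma slM x y : E x -> E y -> E (meet x y). Proof. by case: hE => _ H h1 h2; case: (H _ _ h1 h2). Qed.
Lemma slpos x : E x -> E (pos x). Proof. by move=> h; apply: slJ => //; apply: sl0. Qed.
Lemma slabs x : E x -> E (absv x). Proof. by move=> h; apply: slJ => //; apply: slN. Qed.
Lemma slMn x n : E x -> E (x *+ n). Proof. by move=> h; rewrite -scaler_nat; apply: slZ. Qed.
End Sub.

Section Ideal.
Variable I : F -> Prop.
Hypothesis hI : ideal le join I.
Lemma id0 : I 0. Proof. by case: hI => -[]. Qed.
Lemma idD x y : I x -> I y -> I (x + y). Proof. by case: hI => -[_ H _] _; apply: H. Qed.
Lemma idZ (a : R) x : I x -> I (a *: x). Proof. by case: hI => -[_ _ H] _; apply: H. Qed.
Lemma idN x : I x -> I (- x). Proof. by move=> h; rewrite -scaleN1r; apply: idZ. Qed.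
Lemma idB x y : I x -> I y -> I (x - y). Proof. by move=> h1 h2; apply: idD => //; apply: idN. Qed.
Lemma id_solid x y : I x -> le (absv y) (absv x) -> I y. Proof. by case: hI => _ H; apply: H. Qed.
End Ideal.

Lemma abs0 : absv 0 = 0. Proof. by apply: abs_pos; apply: le_refl. Qed.

Lemma igen_ideal E : ideal le join (ideal_gen le join E).
Proof.
split; first split.
- by move=> I hI _; apply: id0.
- by move=> x y hx hy I hI hEI; apply: idD => //; [apply: hx|apply: hy].
- by move=> a x hx I hI hEI; apply: idZ => //; apply: hx.
- by move=> x y hx hxy I hI hEI; eapply id_solid; [exact: hI| |exact: hxy]; apply: hx.
Qed.
Lemma igen_sub E e : E e -> ideal_gen le join E e.
Proof. by move=> he I _ H; apply: H. Qed.
Lemma igen_bound E x : sublattice join E -> ideal_gen le join E x ->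
  exists e, E e /\ le (absv x) e.
Proof.
move=> hE hx; apply: (hx (fun x => exists e, E e /\ le (absv x) e)).
- split; first split.
  + by exists 0; split; [apply: sl0|rewrite abs0; apply: le_refl].
  + move=> x1 y1 [e1 [he1 h1]] [e2 [he2 h2]]; exists (e1 + e2); split; first exact: slD.
    by apply: le_trans (abs_add _ _) _; apply: le_add2.
  + move=> a x1 [e1 [he1 h1]]; exists (`|a| *: e1); split; first exact: slZ.
    by apply: le_trans (abs_scale _ _) _; apply: le_scale.
  + move=> x1 y1 [e1 [he1 h1]] h; exists e1; split => //; exact: le_trans h h1.
- by move=> e he; exists (absv e); split; [apply: slabs|apply: le_refl].
Qed.

Lemma posE u : pos u = u + neg u.
Proof. by rewrite {2}(pos_neg u) subrK. Qed.

Lemma archi_step p c m : le 0 p -> le p (pos (c - p *+ m)) -> le (p *+ m) (pos c).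
Proof.
move=> hp hpu.
have hd := disjD m hp hpu.
rewrite -(disj_pos hd); apply: pos_mono; apply/le_sub0.
have -> : c - (p *+ m - neg (c - p *+ m)) = pos (c - p *+ m).
  by rewrite opprB posE addrCA addrC.
exact: pos_ge0.
Qed.

Lemma L2 p k e0 : le 0 p -> (forall m, le k (join (k - p) (e0 - p *+ m.+1))) ->
  forall m, le (p *+ m) (pos (e0 - k)).
Proof.
move=> hp h m; apply: archi_step => //.
have := h m.
have -> : join (k - p) (e0 - p *+ m.+1) = pos (e0 - k - p *+ m) + (k - p).
  have -> : join (k - p) (e0 - p *+ m.+1) = join (0 + (k - p)) ((e0 - k - p *+ m) + (k - p)).
    by rewrite add0r mulrS (zA1 _ k).
  by rewrite joinD joinC.
move/(le_add (p - k)).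
rewrite -[p - k]opprB addrK.
by rewrite opprB addrC subrK.
Qed.

Lemma L1 y e0 k p : le y e0 -> le 0 p -> le p (pos (k - y)) ->
  forall n, le y (join (k - p) (e0 - p *+ n)).
Proof.
move=> hy hp hpv [|m].
  by rewrite mulr0n subr0; exact: le_trans hy (joinr _ _).
apply: le_trans (join_mono (le_refl (k - p)) (le_subr (p *+ m.+1) hy)).
have hd : meet (pos (k - y) + p *+ m) (neg (k - y)) = 0.
  apply: meet_sum0; [exact: pos_ge0|exact: mulrn_ge0|exact: neg_ge0|exact: meet_pos_neg|exact: disjD].
have h1 := disj_pos hd.
have -> : join (k - p) (y - p *+ m.+1) =
    join ((pos (k - y) + p *+ m - neg (k - y)) + (y - p *+ m.+1)) (0 + (y - p *+ m.+1)).
  by rewrite add0r [pos (k - y) + _ - _]addrAC -pos_neg mulrS zA2.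
rewrite joinD -/(pos _).
rewrite h1 mulrS zA3; apply: le_addr0; exact: (proj1 (le_sub0 _ _) hpv).
Qed.

Lemma P2 (E : F -> Prop) f e u : archimedean le -> sublattice join E ->
  le 0 f -> E e -> le 0 e ->
  (forall v, E v -> le 0 v -> le v f -> le v e) ->
  E u -> le 0 u -> le u (pos (f - e)) -> u = 0.
Proof.
move=> harch hE hf he he0 hb hu hu0 huw.
apply: (harch u e hu0) => m.
rewrite -(pos_id he0); apply: archi_step => //.
pose t := meet u (u *+ m.+1 - e).
have hEt : E t.
  apply: slM => //; apply: slB => //; exact: slMn.
have hte : le (e + t) e.
  apply: hb; first exact: slD.
  - have h1 : le (- e) t.
      apply: meet_glb.
        apply: le_trans hu0; have := le_opp he0; by rewrite oppr0.
      rewrite -[X in le X _]add0r; apply: le_add; exact: mulrn_ge0.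
    by have := le_addl e h1; rewrite subrr.
  - have hnw : le (neg (f - e)) e.
      apply: join_lub => //; rewrite opprB.
      rewrite -[X in le _ X]addr0; apply: le_addl.
      by have := le_opp hf; rewrite oppr0.
    have h2 : le (t + neg (f - e)) (meet (neg (f - e) + pos (f - e)) (u *+ m.+1)).
      apply: meet_glb.
        by rewrite addrC; apply: le_addl; apply: le_trans (meetl _ _) huw.
      apply: le_trans (le_add _ (meetr _ _)) _.
      rewrite -addrA -[X in le _ X]addr0; apply: le_addl.
      apply/le_sub0; rewrite sub0r opprD opprK; exact: (proj1 (le_sub0 _ _) hnw).
    have h3 := le_trans h2 (meet_sumle (pos_ge0 _) _).
    have h4 : le t (f - e).
      have := le_add (- neg (f - e)) (h3 _); rewrite addrK -pos_neg; apply.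
      by rewrite meetC; apply: disjD.
    by have := le_addl e h4; rewrite [e + (f - e)]addrC subrK.
have ht : le t 0 by apply: (@le_addA _ _ e); rewrite add0r addrC.
move: ht; rewrite /t meetE mulrS zA4 => ht.
by have := le_add (pos (e - u *+ m)) ht; rewrite subrK add0r.
Qed.

Lemma abs_between z f e : le (absv (z - f)) e <-> (le (f - e) z /\ le z (f + e)).
Proof.
split.
  move=> h; split.
    have := le_add f (le_opp (le_trans (abs_gen _) h)).
    by rewrite opprK subrK addrC.
  have := le_add f (le_trans (abs_gex _) h).
  by rewrite subrK addrC.
case=> h1 h2; apply: abs_lub.
  by have := le_add (- f) h2; rewrite [f + e]addrC addrK.
have := le_add f (le_opp h1); rewrite opprB [- z + f]addrC.
by rewrite opprB subrK.
Qed.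

Lemma part1a E (A : Type) (leA : A -> A -> Prop) x f : regular le E ->
  oconv_in le E leA x f -> oconv_in le (fun _ => True) leA x f.
Proof.
move=> hreg [G [hGE [hinf hev]]]; exists G; split => //; split => //.
exact: hreg.
Qed.

Lemma part1b E (A : Type) (leA : A -> A -> Prop) x f :
  archimedean le -> sublattice join E -> regular le E ->
  projection_band le join (ideal_gen le join E) -> directed leA ->
  (forall a, E (x a)) -> E f ->
  oconv_in le (fun _ => True) leA x f -> oconv_in le E leA x f.
Proof.
move=> harch hE hreg [hBid hdec] [[a00] hrefl htrans hdir] hx hf
  [G [_ [[_ hG0 hGinf] hGev]]].
pose y a := absv (x a - f).
have hy a : E (y a) by apply: slabs => //; apply: slB.
pose G' := fun e => E e /\ exists a0, forall a, leA a0 a -> le (y a) e.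
have hG'0 e : G' e -> le 0 e.
  by case=> _ [a0 h]; apply: le_trans (abs_ge0 _) (h a0 (hrefl a0)).
exists G'; split; first by move=> g [].
split; last by move=> g [_ [a0 h]]; exists a0 => a ha; apply/abs_between; apply: h.
split; first exact: sl0.
  exact: hG'0.
move=> h hEh hlb.
have hEk : E (pos h) by apply: slpos.
have hk e : G' e -> le (pos h) e.
  by move=> he; apply: pos_lub; [apply: hlb|apply: hG'0].
apply: le_trans (pos_ge h) _.
apply: hGinf => // g hg.
have [ag hag] := hGev g hg.
have hyg a : leA ag a -> le (y a) g by move=> ha; apply/abs_between; apply: hag.
have [gh [gk [hgh [hgk hgeq]]]] := hdec g.
have [e0 [he0 hge0]] := igen_bound hE hgh.
have hye0 a : leA ag a -> le (y a) e0.
  move=> ha.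
  have hBp : ideal_gen le join E (pos (y a - gh)).
    apply: (id_solid hBid (x := y a - gh)).
      by apply: (idB hBid) => //; apply: igen_sub.
    by rewrite (abs_pos (pos_ge0 _)); apply: pos_le_abs.
  have hpk : le (pos (y a - gh)) (absv gk).
    apply: pos_lub; last exact: abs_ge0.
    apply: le_trans (abs_gex gk).
    by have := le_add (- gh) (hyg a ha); rewrite hgeq zA5.
  have hp0 : le (pos (y a - gh)) 0.
    rewrite -(hgk _ hBp) (abs_pos (pos_ge0 _)).
    by apply: meet_glb => //; apply: le_refl.
  have hygh : le (y a) gh.
    by have := le_add gh (le_trans (pos_ge _) hp0); rewrite subrK add0r.
  exact: le_trans hygh (le_trans (abs_gex _) hge0).
pose Z := fun z => exists b, leA ag b /\ z = pos (pos h - y b).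
have hZinf : inf_in le E Z 0.
  split; first exact: sl0.
    by move=> z [b [_ ->]]; apply: pos_ge0.
  move=> h' hEh' hlb'.
  have hp b : leA ag b -> le (pos h') (pos (pos h - y b)).
    move=> hb; apply: pos_lub; last exact: pos_ge0.
    by apply: hlb'; exists b.
  have hn n : le (pos h) (join (pos h - pos h') (e0 - pos h' *+ n)).
    apply: hk; split.
      apply: slJ => //; apply: slB => //; [exact: slpos|exact: slMn (slpos hE hEh')].
    exists ag => a ha; apply: L1; [exact: hye0|exact: pos_ge0|exact: hp].
  have := L2 (pos_ge0 h') (fun m => hn m.+1) => hm.
  have -> : 0 = pos h' by apply/esym/(harch _ _ (pos_ge0 h') hm).
  exact: pos_ge.
have hZE z : Z z -> E z by move=> [b [_ ->]]; apply: slpos => //; apply: slB.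
have [_ _ hZ] := hreg Z hZE hZinf.
have hw : le (pos (pos h - g)) 0.
  apply: hZ => // z [b [hb ->]]; apply: pos_mono; apply: le_addl; apply: le_opp.
  exact: hyg.
by have := le_add g (le_trans (pos_ge _) hw); rewrite subrK add0r.
Qed.

Lemma le_scalel (a b : R) z : a <= b -> le 0 z -> le (a *: z) (b *: z).
Proof.
move=> hab hz; apply/le_sub0; rewrite -scalerBl.
have := le_scale (x := 0) (y := z) (a := b - a); rewrite scaler0; apply => //.
by rewrite subr_ge0.
Qed.

Lemma bounded E f : archimedean le -> sublattice join E -> order_embedding le E ->
  le 0 f -> exists e, [/\ E e, le 0 e & forall v, E v -> le 0 v -> le v f -> le v e].
Proof.
move=> harch hE hemb hf.
pose U := {u : F | E u /\ le 0 u /\ le u f}.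
pose A := (U * nat)%type.
pose leA (a b : A) := le (sval a.1) (sval b.1) /\ (a.2 <= b.2)%N.
pose c (n : nat) : R := (n.+1%:R)^-1.
have hc0 n : 0 <= c n by rewrite invr_ge0 ler0n.
have hcK n (z : F) : (n.+1%:R : R) *: (c n *: z) = z.
  by rewrite scalerA mulfV ?scale1r // pnatr_eq0.
pose x (a : A) := c a.2 *: sval a.1.
pose u0 : U := exist _ 0 (conj (sl0 hE) (conj (le_refl 0) hf)).
have hdir : directed leA.
  split.
  - exact: (inhabits (u0, 0%N)).
  - by move=> a; split; [apply: le_refl|].
  - by move=> a b d [h1 h2] [h3 h4]; split; [apply: le_trans h3|apply: leq_trans h4].
  - move=> [[u1 [h11 [h12 h13]]] n1] [[u2 [h21 [h22 h23]]] n2].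
    have hU : E (join u1 u2) /\ le 0 (join u1 u2) /\ le (join u1 u2) f.
      split; first exact: slJ.
      by split; [apply: le_trans h12 (joinl _ _)|apply: join_lub].
    exists (exist (fun u => E u /\ le 0 u /\ le u f) _ hU, maxn n1 n2); split; split => /=;
      [exact: joinl|exact: leq_maxl|exact: joinr|exact: leq_maxr].
have hxE a : E (x a) by apply: slZ => //; case: a.1 => ? [].
have hconvF : oconv_in le (fun _ => True) leA x 0.
  exists (fun g => exists n, g = c n *: f); split => //; split.
    split => //.
      by move=> g [n ->]; have := le_scale (hc0 n) hf; rewrite scaler0.
    move=> h _ hlb.
    have hp n : le (pos h) (c n *: f).
      apply: pos_lub; first by apply: hlb; exists n.
      by have := le_scale (hc0 n) hf; rewrite scaler0.
    have hpn n : le (pos h *+ n) f.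
      have st : le (pos h *+ n) (pos h *+ n.+1).
        by rewrite mulrS addrC; apply: le_addr0; apply: pos_ge0.
      apply: le_trans st _.
      rewrite -scaler_nat -(hcK n f); apply: le_scale => //; exact: ler0n.
    have h0 := harch _ _ (pos_ge0 h) hpn.
    by rewrite -h0; apply: pos_ge.
  move=> g [n ->]; exists (u0, n) => -[[u [hu1 [hu2 hu3]]] m] [_ /= hnm].
  rewrite sub0r add0r /x /=; split.
    have st : le (- (c n *: f)) 0.
      by have := le_opp (le_scale (hc0 n) hf); rewrite scaler0 oppr0.
    apply: le_trans st _.
    by have := le_scale (hc0 m) hu2; rewrite scaler0.
  apply: le_trans (le_scale (hc0 m) hu3) _; apply: le_scalel => //.
  by rewrite lef_pV2 ?posrE ?ltr0Sn // ler_nat.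
have [G' [hG'E [[_ hG'0 hG'inf] hG'ev]]] :=
  proj2 (hemb A leA x 0 hdir hxE (sl0 hE)) hconvF.
have [[e he]|hno] := classic (exists e, G' e); last first.
  exists 0; split; [exact: sl0|exact: le_refl|].
  move=> v hv _ _; apply: hG'inf => // g hg; exfalso; apply: hno; by exists g.
have [[u1 n0] h0] := hG'ev e he.
have hb v : E v -> le 0 v -> le v f -> le v (n0.+1%:R *: e).
  move=> hv hv0 hvf.
  have hU : E (join v (sval u1)) /\ le 0 (join v (sval u1)) /\ le (join v (sval u1)) f.
    case: u1 {h0} => u1 [h11 [h12 h13]] /=.
    split; first exact: slJ.
    by split; [apply: le_trans hv0 (joinl _ _)|apply: join_lub].
  have [_ ] := h0 (exist (fun u => E u /\ le 0 u /\ le u f) _ hU, n0) (conj (joinr _ _) (leqnn n0)).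
  rewrite add0r /x /= => hle.
  apply: le_trans (joinl v (sval u1)) _.
  rewrite -(hcK n0 (join v (sval u1))); apply: le_scale => //; exact: ler0n.
exists (n0.+1%:R *: e); split => //.
  exact: slZ (hG'E _ he).
by apply: hb; [exact: sl0|exact: le_refl|].
Qed.

Lemma dc_add H k1 k2 : disj_compl join H k1 -> disj_compl join H k2 ->
  disj_compl join H (k1 + k2).
Proof.
move=> h1 h2 b hb; apply: le_anti; last by apply: meet_ge0; apply: abs_ge0.
apply: le_trans (meet_mono (abs_add _ _) (le_refl _)) _.
rewrite meet_sum0 ?h1 ?h2 //; [exact: le_refl|exact: abs_ge0|exact: abs_ge0|exact: abs_ge0].
Qed.
Lemma dc_opp H k : disj_compl join H k -> disj_compl join H (- k).
Proof. by move=> h b hb; rewrite abs_opp; apply: h. Qed.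

Lemma part2 E : archimedean le -> sublattice join E ->
  order_dense le E (ideal_gen le join E) -> order_embedding le E ->
  projection_band le join (ideal_gen le join E).
Proof.
move=> harch hE hden hemb.
have hBid := igen_ideal E.
split => //.
have hpos f : le 0 f -> exists h k, ideal_gen le join E h /\
    disj_compl join (ideal_gen le join E) k /\ f = h + k.
  move=> hf; have [e [he he0 hb]] := bounded harch hE hemb hf.
  exists (meet f e), (pos (f - e)); split; last split.
  - apply: (id_solid hBid (x := e)); first exact: igen_sub.
    rewrite (abs_pos he0) abs_pos; first exact: meetr.
    exact: meet_ge0.
  - move=> b hb'; rewrite (abs_pos (pos_ge0 _)).
    have hd0 : le 0 (meet (pos (f - e)) (absv b)) by apply: meet_ge0; [apply: pos_ge0|apply: abs_ge0].
    case: (classic (meet (pos (f - e)) (absv b) = 0)) => // hne; exfalso.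
    have hBd : ideal_gen le join E (meet (pos (f - e)) (absv b)).
      apply: (id_solid hBid (x := b)) => //.
      rewrite (abs_pos hd0); apply: le_trans (meetr _ _) _; exact: le_refl.
    have [u [hEu [[hu0 hune] hud]]] := hden _ hBd (conj hd0 (nesym hne)).
    apply: hune; apply/esym; apply: (P2 (E := E) (f := f) (e := e)) => //.
    exact: le_trans hud (meetl _ _).
  - by rewrite meetE subrK.
move=> f.
have [h1 [k1 [hh1 [hk1 e1]]]] := hpos _ (pos_ge0 f).
have [h2 [k2 [hh2 [hk2 e2]]]] := hpos _ (neg_ge0 f).
exists (h1 - h2), (k1 - k2); split; first exact: (idB hBid).
split; first by apply: dc_add => //; apply: dc_opp.
by rewrite {1}(pos_neg f) e1 e2 zA6.
Qed.

End Lat.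

Theorem proposition5p5 (R : realType) (F : lmodType R)
    (le : F -> F -> Prop) (join : F -> F -> F) (E : F -> Prop) :
  vector_lattice le join -> archimedean le ->
  sublattice join E ->
  (regular le E -> projection_band le join (ideal_gen le join E) ->
     order_embedding le E) /\
  (order_dense le E (ideal_gen le join E) -> order_embedding le E ->
     projection_band le join (ideal_gen le join E)).
Proof.
move=> VL harch hE; split.
  move=> hreg hpb A leA x f hdir hx hf; split.
    exact: part1a.
  by move=> h; apply: (part1b VL harch hE hreg hpb hdir hx hf h).
by move=> hden hemb; apply: part2.
Qed.
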